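(* Let $f\colon X\to X$ be a homeomorphism of a metric space $X$. Every isolated set $\Lambda$ of $f$ admits a (discrete) catenary function.
   Context: An $f$-invariant set $\Lambda$ is isolated if there is a compact neighborhood $N$ of $\Lambda$ (an isolating neighborhood) such that $f^n(x)\in N$ for all $n\in\mathbb{Z}$ implies $x\in\Lambda$. For $\mathcal L\colon N\to\mathbb{R}$, set $\ddot{\mathcal L}(x)=\mathcal L(f(x))-2\mathcal L(x)+\mathcal L(f^{-1}(x))$ whenever $f(x),x,f^{-1}(x)\in N$. A catenary function for $\Lambda$ is a continuous $\mathcal L\colon N\to\mathbb{R}$, with $N$ an isolating neighborhood of $\Lambda$, such that $\mathcal L(\Lambda)=0$, $\mathcal L>0$ on $N\setminus\Lambda$, and $\ddot{\mathcal L}(x)=\mathcal L(x)$ wherever $\ddot{\mathcal L}(x)$ is defined. *)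

(* Defs.v *)
From Stdlib Require Import Reals ZArith List.
Open Scope R_scope.

Record MetricSpace := {
  carrier :> Type;
  dist : carrier -> carrier -> R;
  dist_refl : forall x y, dist x y = 0 <-> x = y;
  dist_sym : forall x y, dist x y = dist y x;
  dist_tri : forall x y z, dist x z <= dist x y + dist y z
}.

Section Topology.
Variable X : MetricSpace.

Definition is_open (U : X -> Prop) : Prop :=
  forall x, U x -> exists eps, 0 < eps /\ forall y, dist X x y < eps -> U y.

Definition is_compact (K : X -> Prop) : Prop :=
  forall (I : Type) (U : I -> X -> Prop),
    (forall i, is_open (U i)) ->
    (forall x, K x -> exists i, U i x) ->
    exists l : list I, forall x, K x -> exists i, In i l /\ U i x.

Definition is_neighborhood (N A : X -> Prop) : Prop :=
  exists U, is_open U /\ (forall x, A x -> U x) /\ (forall x, U x -> N x).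

Definition continuous (f : X -> X) : Prop :=
  forall x eps, 0 < eps -> exists delta, 0 < delta /\
    forall y, dist X x y < delta -> dist X (f x) (f y) < eps.

Definition continuous_on (N : X -> Prop) (L : X -> R) : Prop :=
  forall x, N x -> forall eps, 0 < eps -> exists delta, 0 < delta /\
    forall y, N y -> dist X x y < delta -> Rabs (L y - L x) < eps.

Definition homeomorphism (f g : X -> X) : Prop :=
  continuous f /\ continuous g /\
  (forall x, g (f x) = x) /\ (forall x, f (g x) = x).

Definition iterZ (f g : X -> X) (n : Z) (x : X) : X :=
  match n with
  | Z0 => x
  | Zpos p => Nat.iter (Pos.to_nat p) f x
  | Zneg p => Nat.iter (Pos.to_nat p) g x
  end.

Definition invariant (f : X -> X) (Lam : X -> Prop) : Prop :=
  (forall x, Lam x -> Lam (f x)) /\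
  (forall y, Lam y -> exists x, Lam x /\ f x = y).

Definition isolating_neighborhood (f g : X -> X) (Lam N : X -> Prop) : Prop :=
  is_compact N /\ is_neighborhood N Lam /\
  (forall x, (forall n : Z, N (iterZ f g n x)) -> Lam x).

Definition isolated (f g : X -> X) (Lam : X -> Prop) : Prop :=
  invariant f Lam /\ exists N, isolating_neighborhood f g Lam N.

(* L is a catenary function for Lam on N (only values of L on N matter) *)
Definition catenary_function (f g : X -> X) (Lam N : X -> Prop) (L : X -> R)
  : Prop :=
  isolating_neighborhood f g Lam N /\
  continuous_on N L /\
  (forall x, Lam x -> L x = 0) /\
  (forall x, N x -> ~ Lam x -> 0 < L x) /\
  (forall x, N (f x) -> N x -> N (g x) ->
     L (f x) - 2 * L x + L (g x) = L x).

End Topology.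

(* Main.v *)
From Stdlib Require Import Reals ZArith List Lra Psatz Classical.
From Coquelicot Require Import Coquelicot.
Require Import Defs.
Open Scope R_scope.

Lemma dist_nonneg (X : MetricSpace) (x y : X) : 0 <= dist X x y.
Proof.
  pose proof (dist_tri X x y x). rewrite (dist_sym X y x) in H.
  assert (dist X x x = 0) by (apply (dist_refl X); reflexivity). lra.
Qed.

Lemma dist_self (X : MetricSpace) (x : X) : dist X x x = 0.
Proof. apply (dist_refl X); reflexivity. Qed.

Definition dN (X : MetricSpace) (N : X -> Prop) (y : X) : R :=
  real (Glb_Rbar (fun r => exists z, N z /\ r = dist X y z)).

Lemma dN_spec (X : MetricSpace) (N : X -> Prop) (z0 : X) (Hz0 : N z0) (y : X) :
  (forall z, N z -> dN X N y <= dist X y z) /\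
  (forall b, (forall z, N z -> b <= dist X y z) -> b <= dN X N y).
Proof.
  unfold dN.
  destruct (Glb_Rbar_correct (fun r => exists z, N z /\ r = dist X y z)) as [Hlb Hglb].
  destruct (Glb_Rbar (fun r => exists z, N z /\ r = dist X y z)) as [r| |] eqn:E.
  - simpl. split.
    + intros z Hz. apply (Hlb (dist X y z)). eauto.
    + intros b Hb. apply (Hglb (Finite b)). intros x [z [Hz ->]]. simpl. auto.
  - exfalso. specialize (Hlb (dist X y z0) (ex_intro _ z0 (conj Hz0 eq_refl))). simpl in Hlb. auto.
  - exfalso. assert (H := Hglb (Finite 0)). simpl in H. apply H.
    intros x [z [Hz ->]]. simpl. apply dist_nonneg.
Qed.

Lemma dN_nonneg X N z0 (Hz0 : N z0) y : 0 <= dN X N y.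
Proof. apply (proj2 (dN_spec X N z0 Hz0 y)). intros; apply dist_nonneg. Qed.

Lemma dN_zero X N z0 (Hz0 : N z0) y : N y -> dN X N y = 0.
Proof.
  intro Hy. pose proof (proj1 (dN_spec X N z0 Hz0 y) y Hy). rewrite dist_self in H.
  pose proof (dN_nonneg X N z0 Hz0 y). lra.
Qed.

Lemma dN_lip X N z0 (Hz0 : N z0) y y' : dN X N y' <= dN X N y + dist X y y'.
Proof.
  assert (dN X N y' - dist X y y' <= dN X N y); [|lra].
  apply (proj2 (dN_spec X N z0 Hz0 y)). intros z Hz.
  pose proof (proj1 (dN_spec X N z0 Hz0 y') z Hz).
  pose proof (dist_tri X y' y z). rewrite (dist_sym X y' y) in H0. lra.
Qed.

Lemma dN_abs X N z0 (Hz0 : N z0) y y' : Rabs (dN X N y' - dN X N y) <= dist X y y'.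
Proof.
  pose proof (dN_lip X N z0 Hz0 y y'). pose proof (dN_lip X N z0 Hz0 y' y).
  rewrite (dist_sym X y' y) in H0. apply Rabs_le. lra.
Qed.

Lemma ball_open (X : MetricSpace) (c : X) (r : R) : is_open X (fun w => dist X w c < r).
Proof.
  intros x Hx. exists (r - dist X x c). split; [lra|]. intros y Hy.
  pose proof (dist_tri X y x c). rewrite (dist_sym X y x) in H. lra.
Qed.

Lemma min_list (X : MetricSpace) (N : X -> Prop) (y : X) (l : list {z : X | N z}) :
  (forall z : {z : X | N z}, 0 < dist X y (proj1_sig z)) ->
  exists r, 0 < r /\ forall z, In z l -> r <= dist X y (proj1_sig z) / 2.
Proof.
  intro Hpos. induction l as [|a l IH].
  - exists 1. split; [lra|]. intros z [].
  - destruct IH as [r [Hr H]]. exists (Rmin r (dist X y (proj1_sig a) / 2)).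
    split. { apply Rmin_pos; auto. specialize (Hpos a). lra. }
    intros z [<-|Hz]. apply Rmin_r. eapply Rle_trans. apply Rmin_l. auto.
Qed.

Lemma dN_pos X N z0 (Hz0 : N z0) (HN : is_compact X N) y : ~ N y -> 0 < dN X N y.
Proof.
  intro Hy.
  assert (Hpos : forall z : {z : X | N z}, 0 < dist X y (proj1_sig z)).
  { intros [z Hz]. simpl. destruct (dist_nonneg X y z) as [H|H]; auto.
    symmetry in H. apply (dist_refl X) in H. subst. contradiction. }
  destruct (HN {z : X | N z} (fun z w => dist X w (proj1_sig z) < dist X y (proj1_sig z) / 2)) as [l Hl].
  - intros i. apply ball_open.
  - intros x Hx. exists (exist _ x Hx). simpl. rewrite dist_self. specialize (Hpos (exist _ x Hx)). simpl in Hpos. lra.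
  - destruct (min_list X N y l Hpos) as [r [Hr Hrl]].
    apply Rlt_le_trans with r; auto.
    apply (proj2 (dN_spec X N z0 Hz0 y)). intros z Hz.
    destruct (Hl z Hz) as [i [Hi Hu]]. specialize (Hrl i Hi).
    pose proof (dist_tri X y z (proj1_sig i)). lra.
Qed.

Definition mu : R := (3 - sqrt 5) / 2.

Lemma mu_facts : 0 < mu /\ mu < 1 /\ mu * (3 - mu) = 1.
Proof.
  unfold mu. pose proof (sqrt_sqrt 5 ltac:(lra)). pose proof (sqrt_pos 5).
  assert (2 < sqrt 5) by nra. assert (sqrt 5 < 3) by nra.
  split; [lra|split; [lra|nra]].
Qed.

Lemma ex_mu (a : nat -> R) : (forall n, 0 <= a n <= 1) -> ex_series (fun n => mu ^ n * a n).
Proof.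
  intro Ha. destruct mu_facts as [H0 [H1 _]].
  apply (@ex_series_le R_AbsRing R_CompleteNormedModule _ (fun n => mu ^ n)).
  - intro n. change (norm (mu ^ n * a n)) with (Rabs (mu ^ n * a n)).
    pose proof (pow_lt mu n H0). specialize (Ha n).
    rewrite Rabs_pos_eq by nra. nra.
  - apply ex_series_geom. rewrite Rabs_pos_eq; lra.
Qed.

Lemma series_nonneg (b : nat -> R) : (forall n, 0 <= b n) -> ex_series b -> 0 <= Series b.
Proof.
  intros Hb He. replace 0 with (Series (fun _ => 0)).
  apply Series_le; auto. intro; split; [lra| auto].
  rewrite (Series_ext _ (fun n => 0 * 0)) by (intro; ring). rewrite Series_scal_l. ring.
Qed.

Lemma series_zero (b : nat -> R) : (forall n, b n = 0) -> Series b = 0.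
Proof.
  intros Hb. rewrite (Series_ext _ (fun n => 0 * 0)) by (intro; rewrite Hb; ring). rewrite Series_scal_l. ring.
Qed.

Lemma term_le (k : nat) : forall (b : nat -> R), (forall n, 0 <= b n) -> ex_series b -> b k <= Series b.
Proof.
  induction k as [|k IH]; intros b Hb He; rewrite Series_incr_1 by auto.
  - pose proof (series_nonneg (fun n => b (S n)) (fun n => Hb (S n)) (proj1 (ex_series_incr_1 b) He)). lra.
  - pose proof (IH (fun n => b (S n)) (fun n => Hb (S n)) (proj1 (ex_series_incr_1 b) He)). simpl in H.
    specialize (Hb 0%nat). lra.
Qed.

Lemma tail_bound (a : nat -> R) (M : nat) : (forall n, 0 <= a n <= 1) ->
  0 <= Series (fun n => mu ^ n * a n) - sum_f_R0 (fun n => mu ^ n * a n) M <= mu ^ (S M) / (1 - mu).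
Proof.
  intro Ha. destruct mu_facts as [H0 [H1 _]].
  rewrite (Series_incr_n _ (S M)) by (lia || apply ex_mu; auto). simpl pred.
  rewrite (Series_ext _ (fun k => mu ^ (S M) * (mu ^ k * a (S M + k)%nat)))
    by (intro k; rewrite pow_add; ring).
  rewrite Series_scal_l.
  assert (Hs : 0 <= Series (fun k => mu ^ k * a (S M + k)%nat) <= / (1 - mu)).
  { split. apply series_nonneg. intro n. pose proof (pow_lt mu n H0). specialize (Ha (S M + n)%nat). nra.
    apply ex_mu. auto.
    rewrite <- Series_geom by (rewrite Rabs_pos_eq; lra).
    apply Series_le. intro n. pose proof (pow_lt mu n H0). specialize (Ha (S M + n)%nat). nra.
    apply ex_series_geom. rewrite Rabs_pos_eq; lra. }
  pose proof (pow_lt mu (S M) H0). unfold Rdiv.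
  split; [nra|]. replace (sum_f_R0 (fun n => mu ^ n * a n) M +
   mu ^ S M * Series (fun k => mu ^ k * a (S M + k)%nat) - sum_f_R0 (fun n => mu ^ n * a n) M)
   with (mu ^ S M * Series (fun k => mu ^ k * a (S M + k)%nat)) by ring.
  apply Rmult_le_compat_l; lra.
Qed.

Definition phi (X : MetricSpace) N (y : carrier X) : R := Rmin 1 (dN X N y).

Lemma phi_bounds X N z0 (Hz0 : N z0) y : 0 <= phi X N y <= 1.
Proof. unfold phi. pose proof (dN_nonneg X N z0 Hz0 y). unfold Rmin; destruct Rle_dec; lra. Qed.

Lemma phi_lip X N z0 (Hz0 : N z0) y y' : Rabs (phi X N y' - phi X N y) <= dist X y y'.
Proof.
  pose proof (dN_abs X N z0 Hz0 y y'). unfold phi. apply Rabs_le.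
  apply Rabs_le_between in H. unfold Rmin; repeat destruct Rle_dec; lra.
Qed.

Definition cont_at (X : MetricSpace) (F : X -> R) (x : X) : Prop :=
  forall eps, 0 < eps -> exists delta, 0 < delta /\
    forall y, dist X x y < delta -> Rabs (F y - F x) < eps.

Lemma iter_cont (X : MetricSpace) (h : X -> X) : continuous X h -> forall n, continuous X (Nat.iter n h).
Proof.
  intros Hh n. induction n as [|n IH]; simpl.
  - intros x eps He. exists eps. auto.
  - intros x eps He. destruct (Hh (Nat.iter n h x) eps He) as [d1 [Hd1 H1]].
    destruct (IH x d1 Hd1) as [d2 [Hd2 H2]]. exists d2. split; auto. intros y Hy. apply H1. apply H2. exact Hy.
Qed.

Lemma cont_term (X : MetricSpace) N z0 (Hz0 : N z0) (h : X -> X) (Hh : continuous X h) n x :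
  cont_at X (fun y => mu ^ n * phi X N (Nat.iter n h y)) x.
Proof.
  intros eps He. destruct mu_facts as [H0 [H1 _]].
  destruct (iter_cont X h Hh n x eps He) as [d [Hd Hy]]. exists d. split; auto.
  intros y Hxy. rewrite <- Rmult_minus_distr_l. rewrite Rabs_mult.
  pose proof (pow_lt mu n H0).
  rewrite (Rabs_pos_eq (mu ^ n)) by lra.
  pose proof (phi_lip X N z0 Hz0 (Nat.iter n h x) (Nat.iter n h y)). specialize (Hy y Hxy).
  assert (mu ^ n <= 1). { clear -H0 H1. induction n; simpl; [lra| nra]. }
  pose proof (Rabs_pos (phi X N (Nat.iter n h y) - phi X N (Nat.iter n h x))). nra.
Qed.

Lemma cont_plus (X : MetricSpace) (F G : X -> R) x : cont_at X F x -> cont_at X G x -> cont_at X (fun y => F y + G y) x.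
Proof.
  intros HF HG eps He. destruct (HF (eps/2) ltac:(lra)) as [d1 [Hd1 H1]].
  destruct (HG (eps/2) ltac:(lra)) as [d2 [Hd2 H2]]. exists (Rmin d1 d2). split.
  apply Rmin_pos; auto. intros y Hy.
  assert (dist X x y < d1) by (eapply Rlt_le_trans; [apply Hy| apply Rmin_l]).
  assert (dist X x y < d2) by (eapply Rlt_le_trans; [apply Hy| apply Rmin_r]).
  specialize (H1 y H). specialize (H2 y H0).
  replace (F y + G y - (F x + G x)) with ((F y - F x) + (G y - G x)) by ring.
  eapply Rle_lt_trans. apply Rabs_triang. lra.
Qed.

Lemma cont_opp (X : MetricSpace) (F : X -> R) x : cont_at X F x -> cont_at X (fun y => - F y) x.
Proof.
  intros HF eps He. destruct (HF eps He) as [d [Hd H]]. exists d. split; auto.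
  intros y Hy. replace (- F y - - F x) with (- (F y - F x)) by ring. rewrite Rabs_Ropp. auto.
Qed.

Lemma cont_sum (X : MetricSpace) (F : nat -> X -> R) x : (forall n, cont_at X (F n) x) ->
  forall M, cont_at X (fun y => sum_f_R0 (fun n => F n y) M) x.
Proof.
  intros HF M. induction M as [|M IH]; simpl. apply HF.
  apply (cont_plus X _ (F (S M))); auto.
Qed.

Definition Sh (X : MetricSpace) N (h : X -> X) (x : X) : R :=
  Series (fun n => mu ^ n * phi X N (Nat.iter n h x)).

Lemma Sh_cont (X : MetricSpace) N z0 (Hz0 : N z0) (h : X -> X) (Hh : continuous X h) x : cont_at X (Sh X N h) x.
Proof.
  intros eps He. destruct mu_facts as [H0 [H1 _]].
  destruct (pow_lt_1_zero mu ltac:(rewrite Rabs_pos_eq; lra) (eps * (1 - mu) / 3)) as [M HM].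
  { apply Rmult_lt_0_compat; [|lra]. nra. }
  specialize (HM (S M) ltac:(lia)). rewrite Rabs_pos_eq in HM by (apply pow_le; lra).
  assert (Ht : mu ^ S M / (1 - mu) < eps / 3).
  { apply (Rmult_lt_reg_r (1 - mu)); [lra|]. unfold Rdiv. rewrite Rmult_assoc, Rinv_l by lra. lra. }
  destruct (cont_sum X (fun n y => mu ^ n * phi X N (Nat.iter n h y)) x
     (fun n => cont_term X N z0 Hz0 h Hh n x) M (eps / 3) ltac:(lra)) as [d [Hd Hy]].
  exists d. split; auto. intros y Hxy. specialize (Hy y Hxy). simpl in Hy.
  pose proof (tail_bound (fun n => phi X N (Nat.iter n h x)) M (fun n => phi_bounds X N z0 Hz0 _)).
  pose proof (tail_bound (fun n => phi X N (Nat.iter n h y)) M (fun n => phi_bounds X N z0 Hz0 _)).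
  unfold Sh. apply Rabs_def1; apply Rabs_def2 in Hy; lra.
Qed.

Lemma Sh_incr (X : MetricSpace) N z0 (Hz0 : N z0) (h : X -> X) x :
  Sh X N h x = phi X N x + mu * Sh X N h (h x).
Proof.
  unfold Sh. rewrite Series_incr_1 by (apply ex_mu; intro; apply (phi_bounds X N z0 Hz0)).
  replace (mu ^ 0 * phi X N (Nat.iter 0 h x)) with (phi X N x) by (simpl; ring).
  f_equal. rewrite <- Series_scal_l. apply Series_ext.
  intro n. rewrite Nat.iter_succ_r. rewrite <- tech_pow_Rmult. ring.
Qed.

Lemma Sh_back (X : MetricSpace) N z0 (Hz0 : N z0) (h k : X -> X) (Hkh : forall y, k (h y) = y) x :
  Sh X N k (h x) = phi X N (h x) + mu * Sh X N k x.
Proof.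
  rewrite (Sh_incr X N z0 Hz0 k (h x)). rewrite Hkh. reflexivity.
Qed.

Theorem mainTheorem15 (X : MetricSpace) (f g : X -> X)
  (hf : homeomorphism X f g) (Lam : X -> Prop)
  (hLam : isolated X f g Lam) :
  exists (N : X -> Prop) (L : X -> R), catenary_function X f g Lam N L.
Proof.
  destruct hf as [Hf [Hg [Hgf Hfg]]].
  destruct hLam as [[Hinv1 Hinv2] [N HN]].
  exists N.
  destruct HN as [Hcomp [[U [HU [HLU HUN]]] Hiso]].
  assert (HLN : forall x, Lam x -> N x) by auto.
  destruct (classic (exists z0, N z0)) as [[z0 Hz0]|Hne].
  2:{ exists (fun _ => 0). split; [split; [auto| split; [exists U; auto|auto]]|].
      split. intros x Hx eps He. exists 1. split; [lra|]. intros. rewrite Rminus_0_r, Rabs_R0. auto.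
      split. auto. split. intros x Hx. exfalso. eauto. intros. ring. }
  exists (fun x => Sh X N f x + Sh X N g x - phi X N x).
  split; [split; [auto| split; [exists U; auto|auto]]|].
  split.
  { intros x _ eps He.
    assert (Hc : cont_at X (fun x => Sh X N f x + Sh X N g x - phi X N x) x).
    2:{ destruct (Hc eps He) as [d [Hd Hy]]. exists d. split; auto. }
    apply cont_plus. apply cont_plus; apply Sh_cont with z0; auto.
    apply cont_opp. intros e1 He1. exists e1. split; auto. intros y Hy.
    pose proof (phi_lip X N z0 Hz0 x y). lra. }
  assert (HgL : forall y, Lam y -> Lam (g y)).
  { intros y Hy. destruct (Hinv2 y Hy) as [x [Hx <-]]. rewrite Hgf. auto. }
  assert (Hit : forall h, (forall y, Lam y -> Lam (h y)) -> forall n y, Lam y -> Lam (Nat.iter n h y)).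
  { intros h Hh n. induction n; simpl; auto. }
  assert (HS0 : forall h, (forall y, Lam y -> Lam (h y)) -> forall y, Lam y -> Sh X N h y = 0).
  { intros h Hh y Hy. unfold Sh. apply series_zero. intro n.
    unfold phi. rewrite (dN_zero X N z0 Hz0) by (apply HLN; apply Hit; auto). unfold Rmin.
    destruct Rle_dec; [lra|]. ring. }
  assert (Hphi0 : forall y, N y -> phi X N y = 0).
  { intros y Hy. unfold phi. rewrite (dN_zero X N z0 Hz0) by auto. unfold Rmin; destruct Rle_dec; lra. }
  assert (HSnn : forall h y, 0 <= Sh X N h y).
  { intros h y. apply series_nonneg. intro n. pose proof (pow_lt mu n (proj1 mu_facts)).
    pose proof (phi_bounds X N z0 Hz0 (Nat.iter n h y)). nra.
    apply ex_mu. intro; apply (phi_bounds X N z0 Hz0). }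
  assert (HSterm : forall h y n, mu ^ n * phi X N (Nat.iter n h y) <= Sh X N h y).
  { intros h y n. unfold Sh. apply (term_le n (fun n => mu ^ n * phi X N (Nat.iter n h y))). intro m. pose proof (pow_lt mu m (proj1 mu_facts)).
    pose proof (phi_bounds X N z0 Hz0 (Nat.iter m h y)). nra.
    apply ex_mu. intro; apply (phi_bounds X N z0 Hz0). }
  split.
  { intros x Hx. rewrite (HS0 f Hinv1 x Hx), (HS0 g HgL x Hx), (Hphi0 x (HLN x Hx)). ring. }
  split.
  { intros x Hx Hnl. rewrite (Hphi0 x Hx).
    assert (exists n : Z, ~ N (iterZ X f g n x)).
    { apply not_all_ex_not. intro H. apply Hnl. apply Hiso. auto. }
    destruct H as [n Hn].
    destruct n as [|p|p]; simpl in Hn.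
    - contradiction.
    - pose proof (dN_pos X N z0 Hz0 Hcomp _ Hn).
      pose proof (HSterm f x (Pos.to_nat p)). pose proof (HSnn g x).
      pose proof (pow_lt mu (Pos.to_nat p) (proj1 mu_facts)).
      assert (0 < phi X N (Nat.iter (Pos.to_nat p) f x)).
      { unfold phi, Rmin. destruct Rle_dec; lra. }
      nra.
    - pose proof (dN_pos X N z0 Hz0 Hcomp _ Hn).
      pose proof (HSterm g x (Pos.to_nat p)). pose proof (HSnn f x).
      pose proof (pow_lt mu (Pos.to_nat p) (proj1 mu_facts)).
      assert (0 < phi X N (Nat.iter (Pos.to_nat p) g x)).
      { unfold phi, Rmin. destruct Rle_dec; lra. }
      nra. }
  { intros x Hfx Hx Hgx.
    pose proof (Sh_incr X N z0 Hz0 f x) as E1.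
    pose proof (Sh_incr X N z0 Hz0 g x) as E2.
    pose proof (Sh_back X N z0 Hz0 f g Hgf x) as E3.
    pose proof (Sh_back X N z0 Hz0 g f Hfg x) as E4.
    rewrite (Hphi0 x Hx) in *.
    destruct mu_facts as [H0 [H1 H2]].
    rewrite E3, E4.
    set (P := Sh X N f x) in *. set (Q := Sh X N g x) in *.
    set (Pf := Sh X N f (f x)) in *. set (Qg := Sh X N g (g x)) in *.
    assert (Pf = (3 - mu) * P).
    { rewrite E1. transitivity ((mu * (3 - mu)) * Pf). rewrite H2; ring. ring. }
    assert (Qg = (3 - mu) * Q).
    { rewrite E2. transitivity ((mu * (3 - mu)) * Qg). rewrite H2; ring. ring. }
    rewrite H, H3.
    transitivity (((3 - mu) + mu) * (P + Q) - 2 * (P + Q)). ring. ring. }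
Qed.
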